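(* Let $G$ be a reaction network with exactly two reactions and suppose $cap_{pos}(G)=2N+1$ with $0\le N<+\infty$. If for a rate-constant vector $\kappa^*$ and a total-constant vector $c^*$, $G$ has $2N+1$ positive steady states in $\mathcal P_{c^*}$ and $N+1$ of them are stable, then $(\gamma_{\tau1}-\gamma_{\tau2})(\beta_{\tau1}-\alpha_{\tau1})<0$, where $\tau$ and $\gamma_{\tau j}$ are computed from $c^*$. In particular, if $\tau$ is the only index in its class $[\tau]$, then $(\alpha_{\tau1}-\alpha_{\tau2})(\beta_{\tau1}-\alpha_{\tau1})<0$.
   Context: A reaction network $G$ has species $X_1,\dots,X_s$ and $m$ reactions $\sum_{i}\alpha_{ij}X_i\to\sum_i\beta_{ij}X_i$, $\alpha_{ij},\beta_{ij}\in\mathbb Z_{\ge0}$, $(\alpha_{1j},\dots,\alpha_{sj})\neq(\beta_{1j},\dots,\beta_{sj})$; here $m=2$. $\mathcal N$ has entries $\beta_{ij}-\alpha_{ij}$, $S=\mathrm{im}\,\mathcal N$. For $\kappa\in\mathbb R^m_{>0}$, $f(\kappa;x)=\mathcal N(\kappa_1\prod_i x_i^{\alpha_{i1}},\kappa_2\prod_i x_i^{\alpha_{i2}})^\top$. When $G$ has a positive steady state, $S$ is one-dimensional; species are then labelled so that $\beta_{11}-\alpha_{11}\ne0$, and for $c\in\mathbb R^{s-1}$, $\mathcal P_c=\{x\in\mathbb R^s_{\ge0}:(\beta_{i1}-\alpha_{i1})x_1-(\beta_{11}-\alpha_{11})x_i=c_{i-1},\ i=2,\dots,s\}$. A steady state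 is $x\ge0$ with $f(\kappa;x)=0$; positive if $x>0$; nondegenerate if $\mathrm{Jac}_f(x)(S)=S$; stable if nondegenerate and all nonzero eigenvalues of $\mathrm{Jac}_f(x)$ have negative real parts. $cap_{pos}(G)$ is the maximal $N\in\mathbb Z_{\ge0}\cup\{+\infty\}$ such that for some $\kappa$ and compatibility class, $G$ has $N$ positive steady states in it. Notation for $c^*$: $A_1=1,B_1=0$, $A_i=\frac{\beta_{i1}-\alpha_{i1}}{\beta_{11}-\alpha_{11}}$, $B_i=-\frac{c^*_{i-1}}{\beta_{11}-\alpha_{11}}$ ($i\ge2$). $[i]=\{k:A_k\ne0,B_k/A_k=B_i/A_i\}$ if $A_i\ne0$, $[i]=\{k:A_k=0\}$ otherwise; species labelled so that $1,\dots,r$ represent the $r$ distinct classes. $\varphi_k=\min_j\sum_{i\in[k]}\alpha_{ij}$, $\gamma_{kj}=\sum_{i\in[k]}\alpha_{ij}-\varphi_k$. $\mathcal J=\{i:A_i\ne0\}$, $\mathcal H=\{k\in\{1,\dots,r\}\cap\mathcal J:\gamma_{k1},\dots,\gamma_{km}\text{ not all equal}\}$. Standing assumption: if for some rate constants $G$ has $N$ positive steady states in $\mathcal P_{c^*}$ with $0<N<\infty$, species are labelled so that $1\in\mathcal H$. $I_i=(-B_i/A_i,+\infty)$ if $A_i>0$, $(0,+\infty)$ if $A_i=0$, $(0,-B_i/A_i)$ if $A_i<0$; $I=\bigcap_{k\in\mathcal H}I_k$; $\tau\in\mathcal H$ has $A_\tau>0$ with $-B_\tau/A_\tau$ the left endpoint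 of $I$. *)

(* Defs.v *)
From HB Require Import structures.
From mathcomp Require Import all_boot all_order all_algebra.
From mathcomp Require Import reals.
From mathcomp Require Import complex.
Set Implicit Arguments. Unset Strict Implicit. Unset Printing Implicit Defensive.
Import Order.TTheory GRing.Theory Num.Theory.
Local Open Scope ring_scope.

(* A reaction network with  n.+1  species X_0, ..., X_n (species "1" of the
   paper is index 0) and exactly two reactions, indexed by 'I_2 (reaction "1"
   of the paper is index 0).  Reaction j is  sum_i al i j X_i -> sum_i be i j X_i. *)
Section Network.
Variable R : realType.
Variable n : nat.
Variables (al be : 'I_n.+1 -> 'I_2 -> nat).

Definition stoich (i : 'I_n.+1) (j : 'I_2) : int := (be i j)%:Z - (al i j)%:Z.

Definition proper_network : Prop := forall j : 'I_2, exists i, al i j <> be i j.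

Definition fvec (kappa : 'I_2 -> R) (x : {ffun 'I_n.+1 -> R}) (i : 'I_n.+1) : R :=
  \sum_(j < 2) (stoich i j)%:~R * kappa j * \prod_(k < n.+1) x k ^+ al k j.

(* Jacobian matrix of f(kappa; .) at x (explicit partial derivatives of the
   monomials: d/dx_l x_l^a = a x_l^(a-1)). *)
Definition jac (kappa : 'I_2 -> R) (x : {ffun 'I_n.+1 -> R}) : 'M[R]_n.+1 :=
  \matrix_(i, l) \sum_(j < 2) (stoich i j)%:~R * kappa j *
     ((al l j)%:R * x l ^+ (al l j).-1 * \prod_(k < n.+1 | k != l) x k ^+ al k j).

(* The rows of this matrix are the columns of the stoichiometric matrix N,
   so its row space is S = im N (as a space of row vectors). *)
Definition stoichT : 'M[R]_(2, n.+1) := \matrix_(j, i) (stoich i j)%:~R.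

Definition steady_state kappa (x : {ffun 'I_n.+1 -> R}) : Prop :=
  (forall i, 0 <= x i) /\ (forall i, fvec kappa x i = 0).

Definition positive_steady_state kappa (x : {ffun 'I_n.+1 -> R}) : Prop :=
  (forall i, 0 < x i) /\ (forall i, fvec kappa x i = 0).

(* Jac_f(x)(S) = S;  with row vectors, the image of S under v |-> Jac v is
   the row space of  stoichT *m (jac)^T. *)
Definition nondegenerate kappa x : Prop :=
  (stoichT *m (jac kappa x)^T == stoichT)%MS.

Definition eigenvalue_C (M : 'M[R]_n.+1) (lam : R[i]) : Prop :=
  root (map_poly (fun r : R => r%:C%C) (char_poly M)) lam.

Definition stable kappa x : Prop :=
  nondegenerate kappa x /\
  forall lam : R[i], lam != 0 -> eigenvalue_C (jac kappa x) lam -> complex.Re lam < 0.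

(* Stoichiometric compatibility class P_c, c in R^(s-1) = R^n
   (species labelled so that beta_00 - alpha_00 <> 0). *)
Definition in_class (c : 'I_n -> R) (x : {ffun 'I_n.+1 -> R}) : Prop :=
  (forall i, 0 <= x i) /\
  forall j : 'I_n, (stoich (lift ord0 j) 0)%:~R * x ord0
                   - (stoich ord0 0)%:~R * x (lift ord0 j) = c j.

Definition pss_list kappa c (xs : seq {ffun 'I_n.+1 -> R}) : Prop :=
  uniq xs /\
  forall x, x \in xs <-> (positive_steady_state kappa x /\ in_class c x).

Definition has_n_pss kappa c (K : nat) : Prop :=
  exists xs, pss_list kappa c xs /\ size xs = K.

(* cap_pos(G) = K (finite): K is attained and no (kappa, c) has more than K
   (in particular none has infinitely many) positive steady states. *)
Definition cap_pos_eq (K : nat) : Prop :=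
  (exists kappa : 'I_2 -> R, (forall j, 0 < kappa j) /\ exists c, has_n_pss kappa c K) /\
  (forall kappa : 'I_2 -> R, (forall j, 0 < kappa j) -> forall c (xs : seq {ffun 'I_n.+1 -> R}),
      uniq xs -> (forall x, x \in xs -> positive_steady_state kappa x /\ in_class c x) ->
      (size xs <= K)%N).

Definition num_stable kappa (xs : seq {ffun 'I_n.+1 -> R}) (K : nat) : Prop :=
  exists2 ys : seq {ffun 'I_n.+1 -> R}, uniq ys /\ size ys = K &
    forall x, x \in ys <-> (x \in xs /\ stable kappa x).

Section Cstar.
Variable c : 'I_n -> R.

Definition Acoef (i : 'I_n.+1) : R := (stoich i 0)%:~R / (stoich ord0 0)%:~R.
Definition Bcoef (i : 'I_n.+1) : R :=
  match unlift ord0 i with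
  | None => 0
  | Some j => - c j / (stoich ord0 0)%:~R
  end.

Definition cls (i : 'I_n.+1) : {set 'I_n.+1} :=
  if Acoef i != 0 then
    [set k | (Acoef k != 0) && (Bcoef k / Acoef k == Bcoef i / Acoef i)]
  else [set k | Acoef k == 0].

Definition sum_al (k : 'I_n.+1) (j : 'I_2) : nat := \sum_(i in cls k) al i j.
Definition phi (k : 'I_n.+1) : nat := minn (sum_al k 0) (sum_al k 1).
Definition gam (k : 'I_n.+1) (j : 'I_2) : int := (sum_al k j)%:Z - (phi k)%:Z.

Definition class_reps (r : nat) : Prop :=
  (r <= n.+1)%N /\
  (forall i j : 'I_n.+1, (i < r)%N -> (j < r)%N -> i != j -> j \notin cls i) /\
  (forall k : 'I_n.+1, exists2 i : 'I_n.+1, (i < r)%N & k \in cls i).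

Definition Hset (r : nat) : {set 'I_n.+1} :=
  [set k : 'I_n.+1 | [&& (k < r)%N, Acoef k != 0 & gam k 0 != gam k 1]].

Definition Iint (i : 'I_n.+1) (t : R) : Prop :=
  if 0 < Acoef i then - Bcoef i / Acoef i < t
  else if Acoef i == 0 then 0 < t
  else (0 < t) && (t < - Bcoef i / Acoef i).

Definition Iset (r : nat) (t : R) : Prop := forall k, k \in Hset r -> Iint k t.

Definition left_endpoint (r : nat) (a : R) : Prop :=
  (forall t, Iset r t -> a <= t) /\ (forall e, 0 < e -> exists t, Iset r t /\ t < a + e).

Definition is_tau (r : nat) (tau : 'I_n.+1) : Prop :=
  tau \in Hset r /\ 0 < Acoef tau /\ left_endpoint r (- Bcoef tau / Acoef tau).

End Cstar.
End Network.

(* Main.v *)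
Require Import Defs.
From HB Require Import structures.
From mathcomp Require Import all_boot all_order all_algebra.
From mathcomp Require Import reals.
From mathcomp Require Import complex.
From mathcomp Require Import polyrcf.
From mathcomp Require Import ring lra zify.
Set Implicit Arguments. Unset Strict Implicit. Unset Printing Implicit Defensive.
Import Order.TTheory GRing.Theory Num.Theory.
Local Open Scope ring_scope.
Lemma deriv_prod_seq (T : eqType) (R : comNzRingType) (s : seq T) (F : T -> {poly R}) :
  uniq s -> (\prod_(i <- s) F i)^`() =
    \sum_(l <- s) (F l)^`() * \prod_(k <- s | k != l) F k.
Proof.
elim: s => [|a s IH] /=; first by rewrite !big_nil derivC.
move=> /andP [aNs us].
rewrite big_cons derivM IH // big_cons big_cons eqxx /= mulr_sumr.
congr (_ * _ + _).
  rewrite big_seq_cond [RHS]big_seq_cond; apply: eq_bigl => k.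
  by case: (boolP (k \in s)) => //= ks; apply/esym/negP => /eqP kA; move: aNs; rewrite -kA ks.
apply: eq_big_seq => l ls.
rewrite big_cons; case: eqP => [al|_]; first by move: aNs; rewrite al ls.
by rewrite mulrCA.
Qed.

Lemma near_pos (R : rcfType) (p : {poly R}) x : 0 < p.[x] ->
  exists2 d, 0 < d & forall y, `|y - x| < d -> 0 < p.[y].
Proof.
move=> px; have [d d0 Hd] := poly_cont x p px.
exists d => // y /Hd; rewrite ltr_norml => /andP [h _]; lra.
Qed.

Lemma root_sign (R : rcfType) (p : {poly R}) r : root p r -> 0 < p^`().[r] ->
  exists2 d, 0 < d & forall y, `|y - r| < d -> y != r -> 0 < p.[y] * (y - r).
Proof.
move=> /factor_theorem [q ->]; rewrite derivM derivXsubC mulr1 !hornerE subrr mulr0 add0r.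
move=> /near_pos [d d0 Hd]; exists d => // y /Hd qy yr.
rewrite !hornerE -mulrA mulr_gt0 // -expr2 exprn_even_gt0 //= subr_eq0 //.
Qed.

Lemma group_prod (I : finType) (K : eqType) (T : comNzRingType) (M : {set I})
  (key : I -> K) (g : I -> T) (a b : I -> nat) :
  (forall i j, i \in M -> j \in M -> key i = key j -> g i = g j) ->
  (forall i, i \in M -> \sum_(j in M | key j == key i) a j = \sum_(j in M | key j == key i) b j) ->
  \prod_(i in M) g i ^+ a i = \prod_(i in M) g i ^+ b i.
Proof.
move: {2}#|M| (leqnn #|M|) => k; elim: k M => [|k IH] M.
  rewrite leqn0 cards_eq0 => /eqP -> _ _; by rewrite !big_set0.
move=> cM Hg Hs.
case: (set_0Vmem M) => [->|[i0 i0M]]; first by rewrite !big_set0.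
set B := [set j | key j == key i0].
have Hc : forall F : I -> T, \prod_(i in M :&: B) F i = \prod_(i in M | key i == key i0) F i.
  by move=> F; apply: eq_bigl => i; rewrite !inE.
have Hc' : forall F : I -> nat, \sum_(i in M :&: B) F i = \sum_(i in M | key i == key i0) F i.
  by move=> F; apply: eq_bigl => i; rewrite !inE.
rewrite (big_setID B) [in RHS](big_setID B).
have E : forall e : I -> nat, \prod_(i in M :&: B) g i ^+ e i = g i0 ^+ (\sum_(i in M :&: B) e i).
  move=> e; rewrite -prodrXr; apply: eq_bigr => i; rewrite !inE => /andP [iM /eqP ki].
  by rewrite (Hg i i0).
rewrite !E !Hc' Hs //; congr (_ * _).
apply: IH.
- have : (#|M :\: B| <= #|M :\ i0|)%N.
    by apply: subset_leq_card; apply/subsetP => j; rewrite !inE => /andP [kj ->]; rewrite andbT;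
      apply: contraNneq kj => ->.
  by move=> h; move: cM; rewrite (cardsD1 i0 M) i0M add1n ltnS => h2; exact: leq_trans h h2.
- by move=> i j; rewrite !inE => /andP [_ iM] /andP [_ jM]; apply: Hg.
- move=> i; rewrite !inE => /andP [ki iM].
  have H : forall e : I -> nat, \sum_(j in M :\: B | key j == key i) e j = \sum_(j in M | key j == key i) e j.
    move=> e; apply: eq_bigl => j; rewrite !inE.
    case: (boolP (key j == key i)) => [/eqP ->|]; last by rewrite !andbF.
    by rewrite ki.
  by rewrite !H Hs.
Qed.

Section Pigeon.
Variable R : realDomainType.

Lemma foldr_max_mem (x0 : R) s : foldr Num.max x0 s \in x0 :: s.
Proof.
elim: s => [|a s IH] /=; first by rewrite inE.
rewrite /Num.max; case: ifP => _; rewrite !inE ?eqxx ?orbT //.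
move: IH; rewrite inE => /orP [->|->]; by rewrite ?orbT.
Qed.

Lemma foldr_max_ge (x0 : R) s y : y \in x0 :: s -> y <= foldr Num.max x0 s.
Proof.
elim: s => [|a s IH] /=; first by rewrite inE => /eqP ->.
rewrite !inE => /or3P [/eqP yx|/eqP ->|ys].
- by rewrite le_max IH ?orbT // inE yx eqxx.
- by rewrite le_max lexx.
- by rewrite le_max IH ?orbT // inE ys orbT.
Qed.

Lemma pigeon (S T : seq R) N : uniq T -> {subset T <= S} -> size S = (2 * N).+1 ->
  size T = N.+1 ->
  (forall a b, a \in T -> b \in T -> a < b -> exists2 c, c \in S & a < c < b) ->
  exists2 m, m \in T & forall s, s \in S -> m <= s.
Proof.
move=> uT sTS hS sT gap.
case: (boolP (has (fun a => all (fun s => a <= s) S) T)) => [/hasP [m mT /allP H]|H].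
  by exists m.
have H1 : forall a, a \in T -> has (fun s => s < a) S.
  move=> a aT; move/hasPn: H => /(_ a aT) /allPn [s sS]; rewrite -ltNge => sa.
  by apply/hasP; exists s.
pose pr a := let s' := [seq s <- S | s < a] in foldr Num.max (head a s') s'.
have P1 : forall a, a \in T -> (pr a \in S) && (pr a < a).
  move=> a aT; have := H1 a aT; rewrite has_filter /pr.
  case E: [seq s <- S | s < a] => [|h t] //= _.
  have : foldr Num.max h (h :: t) \in [seq s <- S | s < a].
    rewrite E; have := foldr_max_mem h (h :: t).
    by rewrite inE => /orP [/eqP ->|//]; rewrite inE eqxx.
  by rewrite mem_filter andbC.
have P2 : forall a s, a \in T -> s \in S -> s < a -> s <= pr a.
  move=> a s aT sS sa; rewrite /pr.
  have : s \in [seq s <- S | s < a] by rewrite mem_filter sa sS.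
  case E: [seq s <- S | s < a] => [|h t] // st.
  by apply: foldr_max_ge; rewrite inE st orbT.
have P3 : forall a, a \in T -> pr a \notin T.
  move=> a aT; apply/negP => pT.
  have /andP [pS pa] := P1 a aT.
  have [c cS /andP [c1 c2]] := gap _ _ pT aT pa.
  by have := P2 a c aT cS c2; rewrite leNgt c1.
have P4 : {in T &, injective pr}.
  move=> a b aT bT E.
  have [ab|ba|//] := ltgtP a b.
  - have := P2 b a bT (sTS a aT) ab; rewrite -E.
    by have /andP [_ pa] := P1 a aT; rewrite leNgt pa.
  - have := P2 a b aT (sTS b bT) ba; rewrite E.
    by have /andP [_ pb] := P1 b bT; rewrite leNgt pb.
have U : uniq (T ++ map pr T).
  rewrite cat_uniq uT map_inj_in_uniq //= uT andbT.
  by apply/hasPn => x /mapP [a aT ->]; apply: P3.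
have : (size (T ++ map pr T) <= size S)%N.
  apply: uniq_leq_size => // x; rewrite mem_cat => /orP [/sTS //|/mapP [a aT ->]].
  by have /andP [] := P1 a aT.
by rewrite size_cat size_map sT hS; lia.
Qed.
End Pigeon.
Section Net.
Variables (R : realType) (n : nat) (al be : 'I_n.+1 -> 'I_2 -> nat) (kappa : 'I_2 -> R).
Hypothesis kpos : forall j, 0 < kappa j.
Hypothesis s00nz : stoich al be ord0 0 != 0.

Local Notation sR i j := ((stoich al be i j)%:~R : R).
Definition mono j (x : {ffun 'I_n.+1 -> R}) := \prod_(k < n.+1) x k ^+ al k j.
Definition lam := sR ord0 1 / sR ord0 0.

Lemma o0 : ord0 = 0 :> 'I_2. Proof. exact: val_inj. Qed.
Lemma o1 : lift ord0 ord0 = 1 :> 'I_2. Proof. exact: val_inj. Qed.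

Lemma s00R : sR ord0 0 != 0.
Proof. by rewrite intr_eq0. Qed.

Lemma fvecE x i : fvec al be kappa x i =
  sR i 0 * kappa 0 * mono 0 x + sR i 1 * kappa 1 * mono 1 x.
Proof. by rewrite /fvec big_ord_recl big_ord1 o0 o1. Qed.

Lemma mono_gt0 j (x : {ffun 'I_n.+1 -> R}) : (forall i, 0 < x i) -> 0 < mono j x.
Proof. by move=> H; apply: prodr_gt0 => i _; apply: exprn_gt0. Qed.

Lemma lam_rel x : positive_steady_state al be kappa x ->
  (forall i, sR i 1 = lam * sR i 0) /\ lam < 0.
Proof.
move=> [xp fx].
have m0 := mono_gt0 0 xp; have m1 := mono_gt0 1 xp.
have k0 := kpos 0; have k1 := kpos 1.
set q := kappa 0 * mono 0 x / (kappa 1 * mono 1 x).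
have qp : 0 < q by rewrite /q divr_gt0 // mulr_gt0.
have E : forall i, sR i 1 = - q * sR i 0.
  move=> i; have := fx i; rewrite fvecE => h.
  have nz : kappa 1 * mono 1 x != 0 by rewrite mulf_neq0 // gt_eqF.
  have e1 : sR i 1 * (kappa 1 * mono 1 x) = - (sR i 0 * kappa 0 * mono 0 x).
    by rewrite mulrA; lra.
  by rewrite -[LHS](mulfK nz) e1 /q; field; rewrite !gt_eqF.
have lq : lam = - q by rewrite /lam E mulfK // s00R.
by split; [move=> i; rewrite lq E | rewrite lq oppr_lt0].
Qed.

Hypothesis hlam : forall i, sR i 1 = lam * sR i 0.
Hypothesis lamneg : lam < 0.

Lemma fvecE2 x i : fvec al be kappa x i =
  sR i 0 * (kappa 0 * mono 0 x + lam * kappa 1 * mono 1 x).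
Proof. by rewrite fvecE hlam; ring. Qed.

Local Notation Ac i := (Acoef R al be i).
Lemma Ac0 : Ac ord0 = 1.
Proof. by rewrite /Acoef divff // s00R. Qed.
Lemma AcE i : sR i 0 = Ac i * sR ord0 0.
Proof. by rewrite /Acoef mulfVK // s00R. Qed.

Definition xg (B : 'I_n.+1 -> R) (t : R) : {ffun 'I_n.+1 -> R} :=
  [ffun i => Ac i * t + B i].
Definition cB (B : 'I_n.+1 -> R) : 'I_n -> R :=
  fun j => sR (lift ord0 j) 0 * B ord0 - sR ord0 0 * B (lift ord0 j).

Lemma xg_class c B t : (forall j, c j = cB B j) -> (forall i, 0 <= xg B t i) ->
  in_class al be c (xg B t).
Proof.
move=> hc hp; split=> // j; rewrite hc /cB !ffunE Ac0 [sR (lift _ _) 0]AcE.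
ring.
Qed.

Lemma xg0 B t : xg B t ord0 = t + B ord0.
Proof. by rewrite ffunE Ac0 mul1r. Qed.

Lemma class_xg c x : in_class al be c x -> x = xg (Bcoef al be c) (x ord0).
Proof.
move=> [_ H]; apply/ffunP => i; rewrite ffunE /Bcoef.
case: (unliftP ord0 i) => [j|] ->; last by rewrite Ac0 mul1r addr0.
have := H j; rewrite [sR (lift _ _) 0]AcE => <-.
rewrite /Acoef; field; exact: s00R.
Qed.

Definition fp (B : 'I_n.+1 -> R) i : {poly R} := Ac i *: 'X + (B i)%:P.
Definition Pp B j := \prod_(i < n.+1) fp B i ^+ al i j.
Definition Phi B := kappa 0 *: Pp B 0 + (lam * kappa 1) *: Pp B 1.

Lemma hornerfp B i t : (fp B i).[t] = xg B t i.
Proof. by rewrite /fp ffunE !hornerE. Qed.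

Lemma hornerPp B j t : (Pp B j).[t] = mono j (xg B t).
Proof.
rewrite /Pp horner_prod; apply: eq_bigr => i _.
by rewrite horner_exp hornerfp.
Qed.

Lemma hornerPhi B t : (Phi B).[t] =
  kappa 0 * mono 0 (xg B t) + lam * kappa 1 * mono 1 (xg B t).
Proof. by rewrite /Phi !hornerE !hornerPp. Qed.

Lemma pss_xg B t : positive_steady_state al be kappa (xg B t) <->
  (forall i, 0 < xg B t i) /\ (Phi B).[t] = 0.
Proof.
split=> [[p f]|[p f]]; split=> //.
  by have := f ord0; rewrite fvecE2 hornerPhi => /eqP; rewrite mulf_eq0 (negPf s00R) => /eqP.
by move=> i; rewrite fvecE2 -hornerPhi f mulr0.
Qed.

Lemma sRj l (j : 'I_2) : sR l j = (if j == 0 then 1 else lam) * sR l 0.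
Proof.
have : (j == 0) || (j == 1) by case: j => [[|[|]]].
by case/orP => /eqP ->; rewrite ?mul1r // hlam.
Qed.

Definition Dd (x : {ffun 'I_n.+1 -> R}) l j :=
  (al l j)%:R * x l ^+ (al l j).-1 * \prod_(k < n.+1 | k != l) x k ^+ al k j.
Definition ww x l := kappa 0 * Dd x l 0 + lam * kappa 1 * Dd x l 1.

Lemma jacE x : jac al be kappa x = \matrix_(i, l) (sR i 0 * ww x l).
Proof.
apply/matrixP => i l; rewrite !mxE big_ord_recl big_ord1 o0 o1 hlam /ww /Dd; ring.
Qed.

Lemma derivPp B j t : (Pp B j)^`().[t] = \sum_l Ac l * Dd (xg B t) l j.
Proof.
rewrite /Pp deriv_prod_seq ?index_enum_uniq // horner_sum; apply: eq_bigr => l _.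
rewrite deriv_exp /fp derivD derivZ derivX derivC addr0 alg_polyC.
rewrite hornerM hornerMn hornerM horner_exp hornerC horner_prod /Dd.
rewrite -/(fp B l) hornerfp.
under eq_bigr do rewrite horner_exp hornerfp.
rewrite -mulr_natr; ring.
Qed.

Lemma derivPhi B t : (Phi B)^`().[t] = \sum_l Ac l * ww (xg B t) l.
Proof.
rewrite /Phi derivD !derivZ hornerD !hornerZ !derivPp !mulr_sumr -big_split.
apply: eq_bigr => l _; rewrite /ww /=; ring.
Qed.

Lemma stable_deriv B t : stable al be kappa (xg B t) -> sR ord0 0 * (Phi B)^`().[t] < 0.
Proof.
move=> [nd st].
set mu := \sum_l sR l 0 * ww (xg B t) l.
have -> : sR ord0 0 * (Phi B)^`().[t] = mu.
  rewrite derivPhi mulr_sumr; apply: eq_bigr => l _; rewrite [sR l 0]AcE; ring.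
have mu0 : mu != 0.
  apply/eqP => m0; move: nd; rewrite /Defs.nondegenerate.
  have -> : stoichT R al be *m (jac al be kappa (xg B t))^T = 0.
    apply/matrixP => j i; rewrite jacE !mxE.
    under eq_bigr do rewrite !mxE sRj.
    transitivity ((if j == 0 then 1 else lam) * sR i 0 * mu); last by rewrite m0 mulr0.
    by rewrite /mu mulr_sumr; apply: eq_bigr => l _; ring.
  case/andP => _ /submx0null/matrixP/(_ 0 ord0); rewrite !mxE => /eqP.
  by rewrite (negPf s00R).
have eig : eigenvalue (jac al be kappa (xg B t)) mu.
  apply/eigenvalueP; exists (\row_l ww (xg B t) l).
    apply/rowP => l; rewrite jacE !mxE.
    under eq_bigr do rewrite !mxE.
    by rewrite /mu mulr_suml; apply: eq_bigr => i _; ring.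
  apply/negP => /eqP w0; move/eqP: mu0; apply; rewrite /mu big1 // => l _.
  by have := congr1 (fun v : 'rV_n.+1 => v 0 l) w0; rewrite !mxE => ->; rewrite mulr0.
rewrite eigenvalue_root_char in eig.
have H := st (mu%:C)%C.
have nz : (mu%:C)%C != 0.
  by apply/negP => /eqP h; move/eqP: mu0; apply; have := congr1 (@complex.Re R) h.
exact: (H nz (rmorph_root (real_complex R) eig)).
Qed.

Lemma ivt_pn (p : {poly R}) a b : a <= b -> 0 < p.[a] -> p.[b] < 0 ->
  exists cc, [/\ a <= cc, cc <= b & root p cc].
Proof.
move=> ab pa pb.
have h : p.[a] * p.[b] <= 0 by rewrite ltW // pmulr_rlt0.
have [cc] := polyrcf.poly_ivt ab h; rewrite in_itv /= => /andP [h1 h2] rc.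
by exists cc.
Qed.

Lemma lt_helper (a b t L : R) : L = a -> t < a + (b - L) -> b < t -> False.
Proof. move=> ->; lra. Qed.

Lemma sign_helper (a b p : R) : 0 < a * b -> a * p < 0 -> b * p < 0.
Proof. nra. Qed.

Lemma affine_pos (A B a b cc : R) : 0 < A * a + B -> 0 < A * b + B -> a <= cc -> cc <= b ->
  0 < A * cc + B.
Proof.
move=> ha hb h1 h2; have [A0|A0] := lerP 0 A.
  have : A * a <= A * cc by rewrite ler_wpM2l.
  lra.
have : A * b <= A * cc by rewrite ler_wnM2l // ltW.
lra.
Qed.

Lemma fpE B i : Ac i != 0 -> fp B i = (Ac i)%:P * ('X + (B i / Ac i)%:P).
Proof.
move=> h; rewrite /fp mulrDr mul_polyC -polyCM mulrC divfK //.
Qed.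

Section Main2.
Variable c : 'I_n -> R.
Local Notation Bc := (Bcoef al be c).
Local Notation cl := (cls al be c).

Lemma clsE i : Ac i != 0 ->
  cl i = [set k | (Ac k != 0) && (Bc k / Ac k == Bc i / Ac i)].
Proof. by move=> h; rewrite /cls h. Qed.

Lemma cls_eq i k : Ac i != 0 -> i \in cl k -> Ac k != 0 /\ cl i = cl k.
Proof.
move=> hi; rewrite /cls; case: ifP => hk; last by rewrite inE (negPf hi).
rewrite inE hi /= => /eqP e; split => //; by rewrite e.
Qed.

Lemma x0E t : xg Bc t ord0 = t.
Proof. by rewrite xg0 /Bcoef unlift_none addr0. Qed.

Lemma cBc j : c j = cB Bc j.
Proof. rewrite /cB /Bcoef unlift_none liftK; field; exact: s00R. Qed.

Lemma mainlem N r (xs : seq {ffun 'I_n.+1 -> R}) tau :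
  cap_pos_eq R al be (2 * N).+1 ->
  pss_list al be kappa c xs -> size xs = (2 * N).+1 ->
  num_stable al be kappa xs N.+1 -> class_reps al be c r ->
  is_tau al be c r tau ->
  ((sum_al al be c tau 0)%:R - (sum_al al be c tau 1)%:R) * sR tau 0 < 0 :> R.
Proof.
move=> cap [uxs xsP] sxs [ys [uys sys] ysP] [rle [disj cover]] [tauH [Atau [LE1 LE2]]].
have xsE : forall x, x \in xs ->
    [/\ x = xg Bc (x ord0), forall i, 0 < xg Bc (x ord0) i & (Phi Bc).[x ord0] = 0].
  move=> x /xsP [px cx]; have E := class_xg cx.
  by move: px; rewrite {1}E => /pss_xg [p f]; split.
set ts := map (fun x : {ffun 'I_n.+1 -> R} => x ord0) xs.
have tsP : forall t, t \in ts -> (forall i, 0 < xg Bc t i) /\ (Phi Bc).[t] = 0.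
  by move=> t /mapP [x xin ->]; case: (xsE x xin).
have tsC : forall t, (forall i, 0 < xg Bc t i) -> (Phi Bc).[t] = 0 -> t \in ts.
  move=> t p f; apply/mapP; exists (xg Bc t); last by rewrite x0E.
  apply/xsP; split; first by apply/pss_xg.
  by apply: xg_class => [j|i]; [exact: cBc | exact: ltW].
have inj : {in xs &, injective (fun x : {ffun 'I_n.+1 -> R} => x ord0)}.
  move=> x y xi yi /= e; have [-> _ _] := xsE x xi; have [-> _ _] := xsE y yi.
  by rewrite e.
have uts : uniq ts by rewrite map_inj_in_uniq.
have sts : size ts = (2 * N).+1 by rewrite size_map.
set T := map (fun x : {ffun 'I_n.+1 -> R} => x ord0) ys.
have ysxs : {subset ys <= xs} by move=> y /ysP [].
have TP : forall a, a \in T -> a \in ts /\ sR ord0 0 * (Phi Bc)^`().[a] < 0.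
  move=> a /mapP [y yin ->]; have [yx st] := (ysP y).1 yin.
  split; first by apply: map_f.
  have [E _ _] := xsE y yx; apply: stable_deriv; by rewrite -E.
have uT : uniq T by rewrite map_inj_in_uniq // => x y xi yi; apply: inj; apply: ysxs.
have sT : size T = N.+1 by rewrite size_map.
have rootq : forall B u, (Phi B).[u] = 0 -> root (- (sR ord0 0 *: Phi B)) u.
  by move=> B u h; rewrite /root hornerN hornerZ h mulr0 oppr0.
have derq : forall B u, (- (sR ord0 0 *: Phi B))^`().[u] = - (sR ord0 0 * (Phi B)^`().[u]).
  by move=> B u; rewrite derivN derivZ hornerN hornerZ.
have gap : forall a b, a \in T -> b \in T -> a < b -> exists2 cc, cc \in ts & a < cc < b.
  move=> a b aT bT ab.
  have [aS da] := TP a aT; have [bS db] := TP b bT.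
  set q := - (sR ord0 0 *: Phi Bc).
  have qa : 0 < q^`().[a] by rewrite derq oppr_gt0.
  have qb : 0 < q^`().[b] by rewrite derq oppr_gt0.
  have [d1 d1p H1] := root_sign (rootq _ _ (tsP a aS).2) qa.
  have [d2 d2p H2] := root_sign (rootq _ _ (tsP b bS).2) qb.
  set e := Num.min (Num.min (d1/2) (d2/2)) ((b - a)/3).
  have e0 : 0 < e by rewrite !lt_min !divr_gt0 // subr_gt0.
  have e1 : e <= d1/2 by rewrite /e !ge_min lexx.
  have e2 : e <= d2/2 by rewrite /e !ge_min lexx orbT.
  have e3 : e <= (b-a)/3 by rewrite /e !ge_min lexx orbT.
  have p1 : 0 < q.[a + e].
    have := H1 (a + e); rewrite (addrC a) addrK gtr0_norm // => h.
    have {h} h : 0 < q.[e + a] * e by apply: h; [lra | rewrite -subr_eq0 addrK gt_eqF].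
    by move: h; rewrite pmulr_lgt0 // (addrC e a).
  have p2 : q.[b - e] < 0.
    have := H2 (b - e); rewrite addrAC subrr add0r normrN gtr0_norm // => h.
    have {h} h : 0 < q.[b - e] * - e by apply: h; [lra | rewrite -subr_eq0 addrAC subrr add0r oppr_eq0 gt_eqF].
    by move: h; rewrite nmulr_lgt0 // oppr_lt0.
  have ab2 : a + e <= b - e by lra.
  have [cc [c1 c2 rc]] := ivt_pn ab2 p1 p2.
  exists cc; last by apply/andP; split; lra.
  apply: tsC.
    move=> i; rewrite ffunE; apply: (@affine_pos _ _ a b).
    - by have := (tsP a aS).1 i; rewrite ffunE.
    - by have := (tsP b bS).1 i; rewrite ffunE.
    - lra.
    - lra.
  move: rc; rewrite /root /q hornerN hornerZ oppr_eq0 mulf_eq0 (negPf s00R) /=.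
  by move/eqP.
have [r1 r1T r1min] := pigeon uT (fun a aT => (TP a aT).1) sts sT gap.
have [r1S r1d] := TP r1 r1T; have [pr1 _] := tsP r1 r1S.
set L := - Bc tau / Ac tau.
have LB : Ac tau * L + Bc tau = 0 by rewrite /L; field; rewrite gt_eqF.
have LE : forall s, s \in ts -> L < s.
  move=> s sS; have := (tsP s sS).1 tau; rewrite ffunE => h; nra.
have Lr1 := LE r1 r1S.
have posr1 : forall i, 0 < Ac i * r1 + Bc i by move=> i; have := pr1 i; rewrite ffunE.
have Atau0 : Ac tau != 0 by rewrite gt_eqF.
have T3 : forall i, i \in cl tau -> 0 < Ac i /\ Ac i * L + Bc i = 0.
  move=> i; rewrite clsE // inE => /andP [Ai /eqP e].
  have Bi : Bc i = - L * Ac i by rewrite -[Bc i](divfK Ai) e /L; ring.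
  have := posr1 i; rewrite Bi => h.
  split; last by ring.
  nra.
have T4 : forall i, Ac i != 0 -> Ac i * L + Bc i = 0 -> i \in cl tau.
  move=> i Ai e; rewrite clsE // inE Ai /=; apply/eqP.
  have -> : Bc i = - L * Ac i by lra.
  by rewrite /L; field; apply/andP.
pose M := [set i | (0 < Ac i) && (Ac i * L + Bc i < 0)].
pose B' := fun i => if i \in M then - Ac i * (L - 1) else Bc i.
pose key := fun i => Bc i / Ac i.
have T5 : forall i, i \in M -> forall j, (j \in cl i) = (j \in M) && (key j == key i).
  move=> i; rewrite inE => /andP [Ai AiL] j.
  rewrite clsE; last by rewrite gt_eqF.
  rewrite !inE.
  apply/idP/idP.
    move=> /andP [Aj /eqP kj].
    have Bj : Bc j = key i * Ac j by rewrite /key -kj divfK.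
    have Bi : Bc i = key i * Ac i by rewrite /key divfK // gt_eqF.
    have h1 := posr1 i; have h2 := posr1 j.
    rewrite Bi in h1 AiL; rewrite Bj in h2 *.
    have rk : 0 < r1 + key i by nra.
    have Ajp : 0 < Ac j by nra.
    have Lk : L + key i < 0 by nra.
    apply/andP; split; [apply/andP; split => //; nra | by rewrite /key kj].
  by move=> /andP [/andP [Aj _] /eqP kj]; rewrite gt_eqF //=; apply/eqP.
have T6 : forall i, i \in M -> \sum_(j in cl i) al j 0 = \sum_(j in cl i) al j 1.
  move=> i iM; have [k kr ik] := cover i.
  have Ai : Ac i != 0 by move: iM; rewrite inE => /andP [h _]; rewrite gt_eqF.
  have [Ak ce] := cls_eq Ai ik.
  have kk : k \in cl k by rewrite clsE // inE Ak eqxx.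
  have kM : k \in M by move: kk; rewrite -ce T5 // => /andP [].
  have kH : k \notin Hset al be c r.
    apply/negP => kH.
    move: kM; rewrite inE => /andP [Akp AkL].
    have ep : 0 < - Bc k / Ac k - L by rewrite subr_gt0 ltr_pdivlMr //; lra.
    have [t [It tlt]] := LE2 _ ep.
    have := It k kH; rewrite /Iint Akp.
    by move: tlt => h1 h2; apply: (lt_helper _ h1 h2).
  move: kH; rewrite inE kr Ak /= negbK /gam => /eqP h.
  have : sum_al al be c k 0 = sum_al al be c k 1.
    by apply/eqP; rewrite -eqz_nat; apply/eqP; move: h => /addIr.
  by rewrite /sum_al ce.
have AM : forall i, i \in M -> 0 < Ac i /\ Ac i * L + Bc i < 0.
  by move=> i; rewrite inE => /andP.
have fpM : forall i, i \in M ->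
    fp Bc i = (Ac i)%:P * ('X + (key i)%:P) /\ fp B' i = (Ac i)%:P * ('X + (-(L-1))%:P).
  move=> i iM; have Ai : Ac i != 0 by rewrite gt_eqF //; case: (AM i iM).
  split; first exact: fpE.
  by rewrite fpE //; congr (_ * (_ + _%:P)); rewrite /B' iM; field.
have fpN : forall i, i \notin M -> fp B' i = fp Bc i.
  by move=> i iM; rewrite /fp /B' (negPf iM).
have Ssum : forall i, i \in M -> forall F : 'I_n.+1 -> nat,
    \sum_(j in M | key j == key i) F j = \sum_(j in cl i) F j.
  by move=> i iM F; apply: eq_bigl => j; rewrite T5.
set u := fun i => 'X + (key i)%:P.
set v : {poly R} := 'X + (-(L-1))%:P.
have gu : \prod_(i in M) u i ^+ al i 0 = \prod_(i in M) u i ^+ al i 1.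
  apply: (@group_prod _ _ _ M key) => [i j _ _ e|i iM]; first by rewrite /u e.
  by rewrite !Ssum // T6.
have gv : \prod_(i in M) v ^+ al i 0 = \prod_(i in M) v ^+ al i 1.
  apply: (@group_prod _ _ _ M key (fun _ => v)) => [//|i iM].
  by rewrite !Ssum // T6.
have T7 : Pp Bc 0 * Pp B' 1 = Pp B' 0 * Pp Bc 1.
  rewrite /Pp -!big_split /=.
  rewrite (bigID (fun i => i \in M)) [RHS](bigID (fun i => i \in M)) /=.
  congr (_ * _); last by apply: eq_bigr => i iM; rewrite fpN.
  transitivity (\prod_(i in M) (((Ac i)%:P ^+ al i 0 * (Ac i)%:P ^+ al i 1) *
                                 (u i ^+ al i 0 * v ^+ al i 1))).
    by apply: eq_bigr => i iM; have [-> ->] := fpM i iM; rewrite !exprMn; ring.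
  symmetry.
  transitivity (\prod_(i in M) (((Ac i)%:P ^+ al i 0 * (Ac i)%:P ^+ al i 1) *
                                 (u i ^+ al i 1 * v ^+ al i 0))).
    by apply: eq_bigr => i iM; have [-> ->] := fpM i iM; rewrite !exprMn; ring.
  by rewrite !big_split /= gu gv.
have T8 : Phi Bc * Pp B' 1 = Phi B' * Pp Bc 1.
  by rewrite /Phi !mulrDl -!scalerAl T7 [Pp Bc 1 * Pp B' 1]mulrC.
have T9 : forall t s, s \in ts -> L < t -> t <= s -> forall i, 0 < xg B' t i.
  move=> t s sS Lt tls i; rewrite ffunE /B'.
  have ps := (tsP s sS).1 i; rewrite ffunE in ps.
  case: ifP => iM.
    by have [Ap _] := AM i iM; nra.
  have [Ap|Ap] := ltrP 0 (Ac i).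
    have : 0 <= Ac i * L + Bc i by move/negbT: iM; rewrite inE Ap /= -leNgt.
    nra.
  nra.
have P1pos : forall B s, (forall i, 0 < xg B s i) -> 0 < (Pp B 1).[s].
  by move=> B s h; rewrite hornerPp; apply: mono_gt0.
have T10 : forall s, s \in ts -> (Phi B').[s] = 0.
  move=> s sS; have := congr1 (fun p => p.[s]) T8; rewrite /= !hornerM (tsP s sS).2 mul0r.
  move/esym/eqP; rewrite mulf_eq0 => /orP [/eqP //|/eqP h].
  by have := P1pos Bc s (tsP s sS).1; rewrite h ltxx.
have T11 : sR ord0 0 * (Phi B')^`().[r1] < 0.
  have := congr1 (fun p => p^`().[r1]) T8.
  rewrite /= !derivM !hornerD !hornerM (tsP r1 r1S).2 (T10 r1 r1S) !mul0r !addr0 => h.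
  have p1 := P1pos Bc r1 pr1.
  have p2 := P1pos B' r1 (T9 r1 r1 r1S Lr1 (lexx _)).
  have : sR ord0 0 * (Phi B')^`().[r1] * (Pp Bc 1).[r1] < 0.
    by rewrite -mulrA -h mulrA pmulr_llt0.
  by rewrite pmulr_llt0.
set S := fun j => \sum_(i in cl tau) al i j.
set U := fun j => \prod_(i in cl tau) (Ac i)%:P ^+ al i j *
                  \prod_(i | i \notin cl tau) fp B' i ^+ al i j.
have PpE : forall j, Pp B' j = ('X - L%:P) ^+ S j * U j.
  move=> j; rewrite /Pp (bigID (fun i => i \in cl tau)) /= /U mulrA; congr (_ * _).
  transitivity (\prod_(i in cl tau) ((Ac i)%:P ^+ al i j * ('X - L%:P) ^+ al i j)).
    apply: eq_bigr => i it; have [Ai Ali] := T3 i it.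
    have iM : i \notin M by rewrite inE Ai /= Ali ltxx.
    rewrite fpN // fpE ?gt_eqF // exprMn -polyCN; congr (_ * (_ + _%:P) ^+ _).
    have -> : Bc i = - (Ac i * L) by apply/eqP; rewrite -addr_eq0 addrC Ali.
    by field; rewrite gt_eqF.
  by rewrite big_split /= prodrXr mulrC.
have Upos : forall j, 0 < (U j).[L].
  move=> j; rewrite /U hornerM !horner_prod; apply: mulr_gt0; apply: prodr_gt0 => i Hi.
    by rewrite horner_exp hornerC; apply: exprn_gt0; have [] := T3 i Hi.
  rewrite horner_exp hornerfp; apply: exprn_gt0; rewrite ffunE /B'.
  case: ifP => iM; first by have [Ap _] := AM i iM; nra.
  have [Ap|Ap] := ltrP 0 (Ac i).
    have h1 : 0 <= Ac i * L + Bc i by move/negbT: iM; rewrite inE Ap /= -leNgt.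
    have h2 : Ac i * L + Bc i != 0.
      by apply: contra Hi => /eqP h; apply: T4 => //; rewrite gt_eqF.
    by rewrite lt_neqAle eq_sym h2.
  by have := posr1 i; nra.
have S01 : S 0 != S 1.
  move: tauH; rewrite inE => /and3P [_ _]; apply: contra => /eqP e.
  have e' : sum_al al be c tau 0 = sum_al al be c tau 1 by exact: e.
  by rewrite /gam e'.
have k0 := kpos 0; have k1 := kpos 1.
have PhiE : Phi B' = kappa 0 *: (('X - L%:P) ^+ S 0 * U 0) +
                     (lam * kappa 1) *: (('X - L%:P) ^+ S 1 * U 1) by rewrite /Phi !PpE.
have XL : forall y k, L < y -> 0 < (('X - L%:P) ^+ k).[y].
  by move=> y k h; rewrite horner_exp hornerXsubC exprn_gt0 // subr_gt0.
have XL0 : forall k, (0 < k)%N -> (('X - L%:P) ^+ k).[L] = 0.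
  by move=> [|k] // _; rewrite horner_exp hornerXsubC subrr expr0n.
have nearL : exists2 d, 0 < d & forall y, L < y -> y < L + d ->
    ((S 0)%:R - (S 1)%:R) * (Phi B').[y] < 0.
  case: (ltngtP (S 1) (S 0)) => hS; last by rewrite hS eqxx in S01.
  + set V := kappa 0 *: (('X - L%:P) ^+ (S 0 - S 1) * U 0) + (lam * kappa 1) *: U 1.
    have PV : Phi B' = ('X - L%:P) ^+ S 1 * V.
      by rewrite PhiE /V mulrDr -!scalerAr; congr (_ *: _ + _); rewrite [RHS]mulrA -exprD subnKC // ltnW.
    have VL : V.[L] < 0.
      rewrite /V hornerD !hornerZ hornerM XL0 ?subn_gt0 // mul0r mulr0 add0r.
      by rewrite -mulrA nmulr_rlt0 // mulr_gt0.
    have hV : 0 < (- V).[L] by rewrite hornerN oppr_gt0.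
    have [d dp Hd] := near_pos hV.
    exists d => // y Ly yd.
    have Vy : V.[y] < 0.
      by have := Hd y; rewrite hornerN oppr_gt0; apply; rewrite gtr0_norm ?subr_gt0 //; lra.
    have Sp : 0 < (S 0)%:R - (S 1)%:R :> R by rewrite subr_gt0 ltr_nat.
    by rewrite PV hornerM pmulr_rlt0 // pmulr_rlt0 // XL.
  + set V := kappa 0 *: U 0 + (lam * kappa 1) *: (('X - L%:P) ^+ (S 1 - S 0) * U 1).
    have PV : Phi B' = ('X - L%:P) ^+ S 0 * V.
      by rewrite PhiE /V mulrDr -!scalerAr; congr (_ + _ *: _); rewrite [RHS]mulrA -exprD subnKC // ltnW.
    have VL : 0 < V.[L].
      rewrite /V hornerD !hornerZ [(_ * U 1).[L]]hornerM XL0 ?subn_gt0 // mul0r mulr0 addr0.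
      by rewrite mulr_gt0.
    have [d dp Hd] := near_pos VL.
    exists d => // y Ly yd.
    have Vy : 0 < V.[y] by apply: Hd; rewrite gtr0_norm ?subr_gt0 //; lra.
    have Sp : (S 0)%:R - (S 1)%:R < 0 :> R by rewrite subr_lt0 ltr_nat.
    by rewrite PV hornerM nmulr_rlt0 // mulr_gt0 // XL.
have -> : sum_al al be c tau 0 = S 0 by [].
have -> : sum_al al be c tau 1 = S 1 by [].
rewrite ltNge; apply/negP => H0.
have Spos : 0 < ((S 0)%:R - (S 1)%:R) * sR ord0 0.
  have nz1 : (S 0)%:R - (S 1)%:R != 0 :> R by rewrite subr_eq0 eqr_nat.
  rewrite lt_def mulf_neq0 ?s00R //=.
  by move: H0; rewrite AcE mulrCA pmulr_rge0.
have [d1 d1p H1] := nearL.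
set q := - (sR ord0 0 *: Phi B').
have qr1 : 0 < q^`().[r1] by rewrite derq oppr_gt0.
have [d2 d2p H2] := root_sign (rootq _ _ (T10 r1 r1S)) qr1.
set e := Num.min (Num.min (d1/2) (d2/2)) ((r1 - L)/3).
have e0 : 0 < e by rewrite !lt_min !divr_gt0 // subr_gt0.
have e1 : e <= d1/2 by rewrite /e !ge_min lexx.
have e2 : e <= d2/2 by rewrite /e !ge_min lexx orbT.
have e3 : e <= (r1 - L)/3 by rewrite /e !ge_min lexx orbT.
have p1 : 0 < q.[L + e].
  have h : ((S 0)%:R - (S 1)%:R) * (Phi B').[L + e] < 0 by apply: H1; lra.
  rewrite /q hornerN hornerZ oppr_gt0.
  exact: sign_helper Spos h.
have p2 : q.[r1 - e] < 0.
  have := H2 (r1 - e); rewrite addrAC subrr add0r normrN gtr0_norm // => h.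
  have {h} h : 0 < q.[r1 - e] * - e.
    by apply: h; [lra | rewrite -subr_eq0 addrAC subrr add0r oppr_eq0 gt_eqF].
  by move: h; rewrite nmulr_lgt0 // oppr_lt0.
have ab2 : L + e <= r1 - e by lra.
have [ts0 [c1 c2 rc]] := ivt_pn ab2 p1 p2.
have Pts : (Phi B').[ts0] = 0.
  by move: rc; rewrite /root /q hornerN hornerZ oppr_eq0 mulf_eq0 (negPf s00R) => /eqP.
have Lts : L < ts0 by lra.
have tsr : ts0 <= r1 by lra.
set zs := xg B' ts0 :: map (xg B') ts.
have zsP : forall z, z \in zs ->
    positive_steady_state al be kappa z /\ in_class al be (cB B') z.
  move=> z; rewrite inE => /orP [/eqP ->| /mapP [s sS ->]].
    have pz := T9 ts0 r1 r1S Lts tsr.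
    split; first by apply/pss_xg.
    by apply: xg_class => // i; apply: ltW.
  have pz := T9 s s sS (LE s sS) (lexx s).
  split; first by apply/pss_xg; split => //; apply: T10.
  by apply: xg_class => // i; apply: ltW.
have injx : injective (xg B').
  move=> a b hab; have := congr1 (fun f : {ffun 'I_n.+1 -> R} => f ord0) hab.
  by rewrite /= !xg0 => /addIr.
have uzs : uniq zs.
  rewrite /zs cons_uniq (map_inj_uniq injx) uts andbT.
  apply/mapP => [[s sS /injx hs]].
  by have := r1min s sS; rewrite -hs; lra.
have := cap.2 kappa kpos (cB B') zs uzs zsP.
by rewrite /= size_map sts ltnn.
Qed.

End Main2.

End Net.
Theorem lemma7p8 (R : realType) (n : nat) (al be : 'I_n.+1 -> 'I_2 -> nat)
  (N : nat) (kappa : 'I_2 -> R) (c : 'I_n -> R) (r : nat)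
  (xs : seq {ffun 'I_n.+1 -> R}) :
  proper_network al be ->
  stoich al be ord0 0 != 0 ->
  cap_pos_eq R al be (2 * N).+1 ->
  (forall j, 0 < kappa j) ->
  pss_list al be kappa c xs ->
  size xs = (2 * N).+1 ->
  num_stable al be kappa xs N.+1 ->
  class_reps al be c r ->
  ord0 \in Hset al be c r ->
  forall tau : 'I_n.+1, is_tau al be c r tau ->
    ((gam al be c tau 0 - gam al be c tau 1) * stoich al be tau 0 < 0)%R /\
    (cls al be c tau = [set tau] ->
       (((al tau 0)%:Z - (al tau 1)%:Z) * stoich al be tau 0 < 0)%R).
Proof.
move=> prop s00 cap kpos pss sxs nst crep oH tau istau.
have [x0 x0in] : exists x, x \in xs.
  by case: xs pss sxs nst => [|y ys] // _ _ _; exists y; rewrite inE eqxx.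
have [hlam lamneg] := lam_rel kpos s00 (proj1 ((pss.2 x0).1 x0in)).
have M := mainlem kpos s00 hlam lamneg cap pss sxs nst crep istau.
have G : forall a b : nat, (sum_al al be c tau 0 = a) -> (sum_al al be c tau 1 = b) ->
    ((a%:Z - b%:Z) * stoich al be tau 0 < 0)%R.
  move=> a b ea eb; rewrite -(ltrz0 R) rmorphM rmorphB /= -!pmulrn.
  by rewrite -ea -eb.
have gd : gam al be c tau 0 - gam al be c tau 1 =
    (sum_al al be c tau 0)%:Z - (sum_al al be c tau 1)%:Z by rewrite /gam; ring.
split; first by rewrite gd; apply: G.
by move=> hcl; apply: G; rewrite /sum_al hcl big_set1.
Qed.
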